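(* For $\tilde\varphi=\mathrm{Id}+f\in\widetilde{\operatorname{Diff}}(S^1)$ define $R(\tilde\varphi)=2(\tilde\varphi')^{1/2}e^{i(\tilde\varphi-\mathrm{Id})/2}=2(1+f')^{1/2}e^{if/2}\in C^\infty_{2\pi\text{-per}}(\mathbb R,\mathbb C)$. Then $T_{\tilde\varphi}R.h=(\tilde\varphi')^{-1/2}h'e^{if/2}+i(\tilde\varphi')^{1/2}e^{if/2}h$, and for tangent vectors $h=X_1\circ\tilde\varphi$, $k=X_2\circ\tilde\varphi$ (with $X_1,X_2$ smooth $2\pi$-periodic) $$\operatorname{Re}\int_0^{2\pi}T_{\tilde\varphi}R.h\ \overline{T_{\tilde\varphi}R.k}\,dx=\int_0^{2\pi}\big(X_1X_2+X_1'X_2'\big)\,dx,$$ i.e. the pullback under $R$ of the $L^2$ inner product on $C^\infty_{2\pi\text{-per}}(\mathbb R,\mathbb C)$ is the right-invariant Sobolev $H^1$-metric.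
   Context: $\widetilde{\operatorname{Diff}}(S^1)$ is the group of lifts $\tilde\varphi(x)=x+f(x)$, $f\in C^\infty(\mathbb R)$ $2\pi$-periodic with $f'>-1$, of orientation-preserving smooth diffeomorphisms $\varphi$ of $S^1$ via $\varphi(e^{ix})=e^{i\tilde\varphi(x)}$; tangent vectors at $\tilde\varphi$ are $2\pi$-periodic smooth functions $h$ (variations of $f$), written $h=X\circ\tilde\varphi$. The right-invariant $H^1$-metric is $G_\varphi(X\circ\varphi,Y\circ\varphi)=\int (XY+X'Y')\,dx$ over one period. *)

(* Defs.v *)
(* classical reals. Complex-valued functions are represented by
   their real and imaginary parts. *)
From Stdlib Require Import Reals.
Open Scope R_scope.

Definition smooth (g : R -> R) : Prop :=
  exists D : nat -> R -> R, D 0%nat = g /\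
    forall (n : nat) (x : R), derivable_pt_lim (D n) x (D (S n) x).

Definition periodic2pi (g : R -> R) : Prop := forall x, g (x + 2 * PI) = g x.

(* R(phi) = 2 (1+f')^{1/2} e^{i f/2}, for phi = Id + f with derivative 1 + f'. *)
Definition Rmap_re (f f' : R -> R) (x : R) : R := 2 * sqrt (1 + f' x) * cos (f x / 2).
Definition Rmap_im (f f' : R -> R) (x : R) : R := 2 * sqrt (1 + f' x) * sin (f x / 2).

Definition TR_re (f f' h h' : R -> R) (x : R) : R :=
  / sqrt (1 + f' x) * h' x * cos (f x / 2) - sqrt (1 + f' x) * sin (f x / 2) * h x.
Definition TR_im (f f' h h' : R -> R) (x : R) : R :=
  / sqrt (1 + f' x) * h' x * sin (f x / 2) + sqrt (1 + f' x) * cos (f x / 2) * h x.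

(* Main.v *)
Require Import Defs.
From Coquelicot Require Import Coquelicot.
From Stdlib Require Import Reals Lra FunctionalExtensionality.
Open Scope R_scope.

Lemma der_cont (g g' : R -> R) : smooth g -> (forall x, derivable_pt_lim g x (g' x)) -> forall x, continuous g' x.
Proof.
  intros [D [H0 HD]] Hg x.
  assert (E : g' = D 1%nat).
  { apply functional_extensionality; intro y. apply (uniqueness_limite g y).
    apply Hg. rewrite <- H0. apply HD. }
  rewrite E. apply (ex_derive_continuous (D 1%nat)). exists (D 2%nat x). apply is_derive_Reals. apply HD.
Qed.

Lemma fun_cont (g g' : R -> R) : (forall x, derivable_pt_lim g x (g' x)) -> forall x, continuous g x.
Proof. intros Hg x. apply (ex_derive_continuous g). exists (g' x). apply is_derive_Reals. apply Hg. Qed.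

Lemma der_per (g g' : R -> R) : periodic2pi g -> (forall x, derivable_pt_lim g x (g' x)) -> periodic2pi g'.
Proof.
  intros Hp Hg x. apply (uniqueness_limite g x).
  - replace g with (fun y => g (y + 2*PI)) at 1 by (apply functional_extensionality; apply Hp).
    replace (g' (x + 2*PI)) with (g' (x + 2*PI) * 1) by ring.
    apply (derivable_pt_lim_comp (fun y => y + 2*PI) g x 1 (g' (x + 2*PI))).
    + apply is_derive_Reals. auto_derive; auto.
    + apply Hg.
  - apply Hg.
Qed.

Lemma part1 (f f' h h' : R -> R) x : -1 < f' x -> derivable_pt_lim
        (fun t => Rmap_re (fun y => f y + t * h y) (fun y => f' y + t * h' y) x)
        0 (TR_re f f' h h' x).
Proof.
  intro Hf. apply is_derive_Reals. unfold Rmap_re, TR_re. auto_derive; [lra|].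
  rewrite !Rmult_0_l, !Rplus_0_r. unfold Rdiv. field; try (apply Rgt_not_eq, sqrt_lt_R0; lra).
Qed.

Lemma part1i (f f' h h' : R -> R) x : -1 < f' x -> derivable_pt_lim
        (fun t => Rmap_im (fun y => f y + t * h y) (fun y => f' y + t * h' y) x)
        0 (TR_im f f' h h' x).
Proof.
  intro Hf. apply is_derive_Reals. unfold Rmap_im, TR_im. auto_derive; [lra|].
  rewrite !Rmult_0_l, !Rplus_0_r. unfold Rdiv. field; try (apply Rgt_not_eq, sqrt_lt_R0; lra).
Qed.

Lemma cpt (g : R -> R) x : continuity_pt g x -> continuous g x.
Proof. intro H. apply continuity_pt_filterlim. exact H. Qed.

Lemma cpt' (g : R -> R) x : continuous g x -> continuity_pt g x.
Proof. intro H. apply continuity_pt_filterlim. exact H. Qed.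

Lemma per_int (G : R -> R) a : (forall x, continuous G x) -> periodic2pi G ->
  RInt G a (2*PI + a) = RInt G 0 (2*PI).
Proof.
  intros Hc Hp.
  assert (Ex : forall u v, ex_RInt G u v) by (intros; apply (ex_RInt_continuous (V:=R_CompleteNormedModule)); auto).
  assert (Sh : RInt G (2*PI) (2*PI + a) = RInt G 0 a).
  { pose proof (RInt_comp_lin G 1 (2*PI) 0 a (Ex _ _)) as E.
    replace (1 * 0 + 2*PI) with (2*PI) in E by ring.
    replace (1 * a + 2*PI) with (2*PI + a) in E by ring.
    rewrite <- E. apply RInt_ext. intros x _.
    unfold scal; simpl; unfold mult; simpl. rewrite !Rmult_1_l. apply (Hp x). }
  rewrite <- (RInt_Chasles G a (2*PI) (2*PI + a)) by auto.
  rewrite <- (RInt_Chasles G 0 a (2*PI)) by auto.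
  rewrite Sh. unfold plus; simpl. ring.
Qed.

Lemma chain_der (X X' f f' h h' : R -> R) :
  (forall x, derivable_pt_lim X x (X' x)) -> (forall x, derivable_pt_lim f x (f' x)) ->
  (forall x, h x = X (x + f x)) -> (forall x, derivable_pt_lim h x (h' x)) ->
  forall x, h' x = X' (x + f x) * (1 + f' x).
Proof.
  intros HX Hf Hh Hh' x.
  assert (E : h = comp X (fun y => y + f y)).
  { apply functional_extensionality. intro y. apply Hh. }
  apply (uniqueness_limite h x). apply Hh'. rewrite E.
  apply derivable_pt_lim_comp. apply derivable_pt_lim_plus. apply derivable_pt_lim_id. apply Hf.
  apply HX.
Qed.

Lemma pointwise (f f' X1 X1' X2 X2' h h' k k' : R -> R) x :
  -1 < f' x -> h x = X1 (x + f x) -> k x = X2 (x + f x) ->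
  h' x = X1' (x + f x) * (1 + f' x) -> k' x = X2' (x + f x) * (1 + f' x) ->
  TR_re f f' h h' x * TR_re f f' k k' x + TR_im f f' h h' x * TR_im f f' k k' x
  = (1 + f' x) * (X1 (x + f x) * X2 (x + f x) + X1' (x + f x) * X2' (x + f x)).
Proof.
  intros Hf E1 E2 E3 E4. unfold TR_re, TR_im. rewrite E1, E2, E3, E4.
  assert (Hs : sqrt (1 + f' x) * sqrt (1 + f' x) = 1 + f' x) by (apply sqrt_sqrt; lra).
  assert (Hp : 0 < sqrt (1 + f' x)) by (apply sqrt_lt_R0; lra).
  pose proof (sin2_cos2 (f x / 2)) as Hsc. unfold Rsqr in Hsc.
  set (s := sqrt (1 + f' x)) in *. set (c := cos (f x / 2)) in *. set (sn := sin (f x / 2)) in *.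
  rewrite <- Hs.
  rewrite <- (Rmult_1_r (s * s * _)). rewrite <- Hsc. field. lra.
Qed.

Theorem mainTheorem14 :
  forall (f f' X1 X1' X2 X2' h h' k k' : R -> R),
    smooth f -> periodic2pi f ->
    (forall x, derivable_pt_lim f x (f' x)) ->
    (forall x, -1 < f' x) ->
    smooth X1 -> periodic2pi X1 -> (forall x, derivable_pt_lim X1 x (X1' x)) ->
    smooth X2 -> periodic2pi X2 -> (forall x, derivable_pt_lim X2 x (X2' x)) ->
    (forall x, h x = X1 (x + f x)) -> (forall x, derivable_pt_lim h x (h' x)) ->
    (forall x, k x = X2 (x + f x)) -> (forall x, derivable_pt_lim k x (k' x)) ->
    (forall x, derivable_pt_lim
        (fun t => Rmap_re (fun y => f y + t * h y) (fun y => f' y + t * h' y) x)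
        0 (TR_re f f' h h' x)) /\
    (forall x, derivable_pt_lim
        (fun t => Rmap_im (fun y => f y + t * h y) (fun y => f' y + t * h' y) x)
        0 (TR_im f f' h h' x)) /\
    exists (pr1 : Riemann_integrable
                    (fun x => TR_re f f' h h' x * TR_re f f' k k' x
                              + TR_im f f' h h' x * TR_im f f' k k' x) 0 (2 * PI))
           (pr2 : Riemann_integrable
                    (fun x => X1 x * X2 x + X1' x * X2' x) 0 (2 * PI)),
      RiemannInt pr1 = RiemannInt pr2.
Proof.
  intros f f' X1 X1' X2 X2' h h' k k' Sf Pf Df Hf S1 P1 D1 S2 P2 D2 Eh Dh Ek Dk.
  split; [intro x; apply part1; auto|].
  split; [intro x; apply part1i; auto|].
  set (G := fun y => X1 y * X2 y + X1' y * X2' y).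
  assert (CG : forall y, continuity_pt G y).
  { assert (A1 := fun_cont _ _ D1). assert (A2 := fun_cont _ _ D2).
    assert (B1 := der_cont X1 X1' S1 D1). assert (B2 := der_cont X2 X2' S2 D2).
    intro y. unfold G. apply continuity_pt_plus; apply continuity_pt_mult; apply cpt'; auto. }
  assert (PG : periodic2pi G).
  { intro y. unfold G. rewrite P1, P2, (der_per X1 X1' P1 D1), (der_per X2 X2' P2 D2). reflexivity. }
  assert (Cf' : forall y, continuity_pt f' y) by (intro y; apply cpt'; apply (der_cont f); auto).
  assert (Cphi : forall y, continuity_pt (fun z => z + f z) y).
  { intro y. apply continuity_pt_plus. apply derivable_continuous_pt, derivable_pt_id.
    apply cpt', (fun_cont f f' Df). }
  set (I := fun x => (1 + f' x) * G (x + f x)).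
  assert (EI : forall x, TR_re f f' h h' x * TR_re f f' k k' x + TR_im f f' h h' x * TR_im f f' k k' x = I x).
  { intro x. unfold I, G. apply pointwise; auto; eapply chain_der; eauto. }
  assert (CI : forall x, continuity_pt I x).
  { intro x. unfold I. apply continuity_pt_mult.
    apply continuity_pt_plus. apply continuity_pt_const. intros a b; auto. apply Cf'.
    apply (continuity_pt_comp (fun z => z + f z) G). apply Cphi. apply CG. }
  assert (Ex1 : ex_RInt (fun x => TR_re f f' h h' x * TR_re f f' k k' x + TR_im f f' h h' x * TR_im f f' k k' x) 0 (2*PI)).
  { apply (ex_RInt_ext I). intros; symmetry; apply EI.
    apply (ex_RInt_continuous (V:=R_CompleteNormedModule)). intros; apply cpt, CI. }
  assert (Ex2 : ex_RInt G 0 (2*PI)).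
  { apply (ex_RInt_continuous (V:=R_CompleteNormedModule)). intros; apply cpt, CG. }
  exists (ex_RInt_Reals_0 _ _ _ Ex1), (ex_RInt_Reals_0 _ _ _ Ex2).
  rewrite <- !RInt_Reals.
  rewrite (RInt_ext _ I) by (intros; apply EI).
  assert (RC : RInt I 0 (2*PI) = RInt G (0 + f 0) (2*PI + f (2*PI))).
  { rewrite <- (RInt_comp G (fun z => z + f z) (fun z => 1 + f' z)).
    - apply RInt_ext. intros; reflexivity.
    - intros; apply cpt, CG.
    - intros x _. split. apply is_derive_Reals. apply derivable_pt_lim_plus.
      apply derivable_pt_lim_id. apply Df. apply cpt. apply continuity_pt_plus.
      apply continuity_pt_const. intros a b; auto. apply Cf'. }
  rewrite RC. rewrite Rplus_0_l.
  replace (f (2*PI)) with (f 0) by (rewrite <- (Pf 0), Rplus_0_l; reflexivity).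
  apply per_int; auto. intro; apply cpt, CG.
Qed.
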